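(* For each $m\ge1$, the sequence $(u_{k;m})_{k\ge0}$ is strictly increasing and converges to $b/(m+1)$: $$u_{0;m}<u_{1;m}<\dots<u_{k;m}<\dots,\qquad \lim_{k\to\infty}u_{k;m}=\frac{b}{m+1}.$$ Moreover, if $b=2$ and $d=1$, then $u_{0;m}=0$ for all $m\ge1$ and $u_{1;m}=2/(2^{m+1}-1)$ for all $m\ge0$.
   Context: Fix $b\ge2$ and $d\in\{0,\dots,b-1\}$. A string is a finite sequence $X=(d_l,\dots,d_1)$ of digits in $\{0,\dots,b-1\}$ (leading zeros allowed), of length $|X|=l\ge0$; its value is $n(X)=\sum_{i=1}^{l}d_ib^{i-1}$ ($0$ for the empty string). For $k\ge0$, $\mu_k=\sum_{X}b^{-|X|}\delta_{n(X)/b^{|X|}}$, the sum over all strings $X$ containing $d$ exactly $k$ times; it is a finite measure on $[0,1)$ of total mass $b$. The moments are $u_{k;m}=\int_{[0,1)}x^m\,d\mu_k(x)$. *)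

(* Defs.v *)
From HB Require Import structures.
From mathcomp Require Import all_boot all_order all_algebra.
From mathcomp Require Import all_classical all_reals all_analysis.
Set Implicit Arguments. Unset Strict Implicit. Unset Printing Implicit Defensive.
Import Order.TTheory GRing.Theory Num.Theory.
Local Open Scope ring_scope.

(* Convention: entry i (0-based) of the tuple is the digit d_{i+1}, i.e. the
   coefficient of b^i.  (Any fixed convention gives the same multiset of
   (value, length, #d) triples.) *)

Definition strval (b l : nat) (t : l.-tuple 'I_b) : nat :=
  (\sum_(i < l) (tnth t i : nat) * b ^ i)%N.

Definition moment_len (R : realType) (b : nat) (d : 'I_b) (k m l : nat) : R :=
  \sum_(t : l.-tuple 'I_b | count_mem d t == k)
     (b%:R ^+ l)^-1 * ((strval t)%:R / b%:R ^+ l) ^+ m.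

(* u_{k;m} = int x^m d mu_k(x) = sum over all strings with exactly k d's,
   an (extended) nonnegative series over lengths l >= 0. *)
Definition u (R : realType) (b : nat) (d : 'I_b) (k m : nat) : \bar R :=
  (\sum_(0 <= l <oo) (moment_len R d k m l)%:E)%E.

(* Main.v *)
Require Import Defs.
From HB Require Import structures.
From mathcomp Require Import all_boot all_order all_algebra.
From mathcomp Require Import all_classical all_reals all_analysis.
From mathcomp Require Import ring lra.
Import Order.TTheory GRing.Theory Num.Theory.
Import numFieldNormedType.Exports.
Local Open Scope classical_set_scope.
Local Open Scope ring_scope.

Section S.
Variables (R : realType) (b : nat) (d : 'I_b).
Hypothesis hb : (1 < b)%N.

Definition xv l (t : l.-tuple 'I_b) : R := (strval t)%:R / b%:R ^+ l.
Arguments xv {l}.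
Definition a k m l : R := moment_len R d k m l.
Definition ws (j : 'I_b) k i l : R :=
  if j == d then (if k is k'.+1 then a k' i l else 0) else a k i l.

Lemma bne0 : (b%:R : R) != 0.
Proof. by rewrite pnatr_eq0 -lt0n ltnW. Qed.

Lemma strval_rcons l (t : l.-tuple 'I_b) (j : 'I_b) :
  strval [tuple of rcons t j] = (strval t + j * b ^ l)%N.
Proof.
rewrite /strval big_ord_recr /=; congr (_ + _)%N.
  apply: eq_bigr => i _; congr (_ * _)%N.
  by rewrite !(tnth_nth j) /= nth_rcons size_tuple ltn_ord.
by rewrite (tnth_nth j) /= nth_rcons size_tuple ltnn eqxx.
Qed.

Lemma count_rcons l (t : l.-tuple 'I_b) (j : 'I_b) :
  count_mem d [tuple of rcons t j] = (count_mem d t + (j == d))%N.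
Proof. by rewrite /= -cats1 count_cat /= addn0 eq_sym. Qed.

Definition hrc l (p : 'I_b * l.-tuple 'I_b) : l.+1.-tuple 'I_b :=
  [tuple of rcons p.2 p.1].

Lemma hrc_bij l : bijective (@hrc l).
Proof.
apply: inj_card_bij.
  move=> [j t] [j' t'] /(congr1 val) /= /rcons_inj [/val_inj -> ->] //.
by rewrite card_prod !card_tuple card_ord expnS.
Qed.

Lemma a0 k m : a k m 0 = ((k == 0)%N && (m == 0)%N)%:R.
Proof.
rewrite /a /moment_len; case: k => [|k].
  rewrite (big_pred1 [tuple]); last by move=> t; rewrite tuple0 /=; apply/esym/eqP.
  by rewrite /strval big_ord0 expr0 invr1 mul1r mul0r expr0n.
by rewrite big_pred0 // => t; rewrite tuple0.
Qed.

Lemma wsE (j : 'I_b) k i l : ws j k i l =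
  \sum_(t : l.-tuple 'I_b)
     (if (count_mem d t + (j == d) == k)%N then (b%:R ^+ l)^-1 * xv t ^+ i else 0).
Proof.
rewrite /ws /a /moment_len -big_mkcond /=; case: eqP => [_|_].
  case: k => [|k]; last by apply: eq_bigl => t; rewrite addn1.
  by rewrite big_pred0 // => t; rewrite addn1.
by apply: eq_bigl => t; rewrite addn0.
Qed.

Lemma aS k m l : a k m l.+1 = (b%:R ^+ m.+1)^-1 *
  \sum_(i < m.+1) 'C(m, i)%:R * \sum_(j < b) (j%:R ^+ (m - i)) * ws j k i l.
Proof.
have b0 := bne0.
transitivity (\sum_(j < b) \sum_(t : l.-tuple 'I_b)
  (if (count_mem d t + (j == d) == k)%N then
     (b%:R ^+ l.+1)^-1 * ((xv t + j%:R) / b%:R) ^+ m else 0)).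
  rewrite /a /moment_len (reindex (@hrc l)) /=; last by apply/onW_bij/hrc_bij.
  rewrite big_mkcond pair_bigA /=; apply: eq_bigr => -[j t] _ /=.
  rewrite /hrc /= count_rcons strval_rcons; case: ifP => // _.
  congr (_ * _ ^+ _); rewrite /xv natrD natrM natrX exprS; field.
  by rewrite b0 expf_neq0.
under eq_bigr => j _ do under eq_bigr => t _ do rewrite (addrC (xv t)) expr_div_n exprDn.
transitivity (\sum_(j < b) \sum_(t : l.-tuple 'I_b) \sum_(i < m.+1)
  (if (count_mem d t + (j == d) == k)%N then
     (b%:R ^+ m.+1)^-1 * ('C(m, i)%:R * (j%:R ^+ (m - i) * ((b%:R ^+ l)^-1 * xv t ^+ i)))
   else 0)).
  apply: eq_bigr => j _; apply: eq_bigr => t _; case: ifP => _; last by rewrite big1.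
  rewrite mulrC !big_distrl /=; apply: eq_bigr => i _.
  rewrite -mulr_natl !exprS; field.
  by rewrite b0 !expf_neq0.
rewrite big_distrr /=; under eq_bigr => j _ do rewrite exchange_big /=.
rewrite exchange_big /=; apply: eq_bigr => i _.
rewrite !mulr_sumr; apply: eq_bigr => j _; rewrite wsE !mulr_sumr; apply: eq_bigr => t _.
by case: ifP; rewrite ?mulr0.
Qed.

Definition S k m n : R := \sum_(l < n) a k m l.
Definition Sw (j : 'I_b) k i n : R :=
  if j == d then (if k is k'.+1 then S k' i n else 0) else S k i n.

Lemma SS k m n : S k m n.+1 = ((k == 0)%N && (m == 0)%N)%:R + (b%:R ^+ m.+1)^-1 *
  \sum_(i < m.+1) 'C(m, i)%:R * \sum_(j < b) (j%:R ^+ (m - i)) * Sw j k i n.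
Proof.
rewrite /S big_ord_recl a0; congr (_ + _).
under eq_bigr do rewrite aS; rewrite -mulr_sumr; congr (_ * _).
rewrite exchange_big /=; apply: eq_bigr => i _; rewrite -mulr_sumr; congr (_ * _).
rewrite exchange_big /=; apply: eq_bigr => j _; rewrite -mulr_sumr; congr (_ * _).
rewrite /Sw /ws /S; case: (j == d) => //; case: k => //.
by rewrite big1.
Qed.

Lemma xv_ge0 l (t : l.-tuple 'I_b) : 0 <= xv t.
Proof. by rewrite /xv divr_ge0 // exprn_ge0. Qed.

Lemma strval_lt l (t : l.-tuple 'I_b) : (strval t < b ^ l)%N.
Proof.
have h : (strval t <= (b ^ l).-1)%N.
  rewrite predn_exp /strval big_distrr /= leq_sum // => i _.
  by rewrite leq_mul2r -ltnS prednK ?ltn_ord ?orbT // (ltn_trans _ hb).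
by rewrite (leq_ltn_trans h) // prednK // expn_gt0 (ltn_trans _ hb).
Qed.

Lemma xv_le1 l (t : l.-tuple 'I_b) : xv t <= 1.
Proof.
have b0 : (0 < b%:R ^+ l :> R) by rewrite exprn_gt0 // ltr0n (ltn_trans _ hb).
rewrite /xv ler_pdivrMr // mul1r -natrX ler_nat ltnW //; exact: strval_lt.
Qed.

Lemma a_ge0 k m l : 0 <= a k m l.
Proof.
rewrite /a /moment_len; apply: sumr_ge0 => t _.
by rewrite mulr_ge0 ?invr_ge0 ?exprn_ge0 ?xv_ge0.
Qed.

Lemma a_le k m l : a k m l <= a k 0 l.
Proof.
rewrite /a /moment_len ler_sum // => t _; rewrite expr0 ler_pM2l.
  by rewrite exprn_ile1 ?xv_ge0 ?xv_le1.
by rewrite invr_gt0 exprn_gt0 // ltr0n (ltn_trans _ hb).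
Qed.

Lemma sum_split (F : 'I_b -> R) c : (forall j, j != d -> F j = c) ->
  \sum_(j < b) F j = F d + (b%:R - 1) * c.
Proof.
move=> Fc; rewrite (bigD1 d) //=; congr (_ + _).
rewrite (eq_bigr (fun _ => c)) // sumr_const cardC1 card_ord -mulr_natl.
by rewrite -{2}(prednK (ltnW hb)) -addn1 natrD mulr1 addrK mulr_natl.
Qed.

Lemma S_ge0 k m n : 0 <= S k m n.
Proof. by rewrite /S; apply: sumr_ge0 => l _; exact: a_ge0. Qed.

Lemma S0_le n k : S k 0 n <= b%:R.
Proof.
elim: n k => [|n IH] k; first by rewrite /S big_ord0 ler0n.
have b0 : (0 < b%:R :> R) by rewrite ltr0n (ltn_trans _ hb).
rewrite SS big_ord_recl big_ord0 addr0 bin0 mul1r.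
rewrite eqxx andbT; under eq_bigr do rewrite sub0n expr0 mul1r.
rewrite (@sum_split _ (S k 0 n)); last by move=> j /negbTE; rewrite /Sw => ->.
have H1 := IH k; have H0 := S_ge0 k 0 n; have b1 : (1 < b%:R :> R) by rewrite ltr1n.
rewrite /Sw eqxx; case: k IH H1 H0 => [|k] IH H1 H0 /=.
  rewrite add0r mulrC.
  suff : (b%:R - 1) * S 0 0 n / b%:R <= b%:R - 1 by lra.
  by rewrite ler_pdivrMr //; nra.
have H2 := IH k; rewrite add0r mulrC ler_pdivrMr //; nra.
Qed.


Lemma cvg_sum_ord n (F : 'I_n -> nat -> R) (L : 'I_n -> R) :
  (forall i, F i k @[k --> \oo] --> L i) ->
  \sum_(i < n) F i k @[k --> \oo] --> \sum_(i < n) L i.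
Proof.
move=> h; apply: (@cvg_big R _ +%R 0 xpredT _ _ _ (index_enum _) F L) => //.
  exact: add_continuous.
Qed.

Lemma S_le k m n : S k m n <= b%:R.
Proof.
apply: le_trans (S0_le n k); rewrite /S ler_sum // => l _; exact: a_le.
Qed.

Lemma S_cvg k m : cvgn (S k m).
Proof.
apply: nondecreasing_is_cvgn.
  by apply/nondecreasing_seqP => n; rewrite /S big_ord_recr /= lerDl a_ge0.
by exists b%:R => _ [n _ <-]; exact: S_le.
Qed.

Definition v k m := limn (S k m).

Lemma v_ge0 k m : 0 <= v k m.
Proof. by apply: limr_ge; [exact: S_cvg | near=> n; exact: S_ge0]. Unshelve. all: end_near. Qed.

Lemma v_le k m : v k m <= b%:R.
Proof. by apply: limr_le; [exact: S_cvg | near=> n; exact: S_le]. Unshelve. all: end_near. Qed.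

Lemma uE k m : u R d k m = (v k m)%:E.
Proof.
rewrite /u /v -EFin_lim; last exact: S_cvg.
congr (limn _); apply: funext => n /=.
by rewrite sumEFin big_mkord.
Qed.

Definition Wv (j : 'I_b) k i : R :=
  if j == d then (if k is k'.+1 then v k' i else 0) else v k i.

Lemma Sw_cvg j k i : Sw j k i n @[n --> \oo] --> Wv j k i.
Proof.
rewrite /Sw /Wv; case: (j == d); last exact: S_cvg.
case: k => [|k]; [exact: cvg_cst | exact: S_cvg].
Qed.

Lemma vrec k m : v k m = ((k == 0)%N && (m == 0)%N)%:R + (b%:R ^+ m.+1)^-1 *
  \sum_(i < m.+1) 'C(m, i)%:R * \sum_(j < b) (j%:R ^+ (m - i)) * Wv j k i.
Proof.
have h : S k m n.+1 @[n --> \oo] --> (((k == 0)%N && (m == 0)%N)%:R + (b%:R ^+ m.+1)^-1 *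
  \sum_(i < m.+1) 'C(m, i)%:R * \sum_(j < b) (j%:R ^+ (m - i)) * Wv j k i).
  under eq_cvg do rewrite SS.
  apply: cvgD; first exact: cvg_cst.
  apply: cvgMl_tmp; apply: cvg_sum_ord => i; apply: cvgMl_tmp.
  apply: cvg_sum_ord => j; apply: cvgMl_tmp; exact: Sw_cvg.
rewrite /v; apply: cvg_lim => //.
by move: h; rewrite (cvg_shiftS (S k m)).
Qed.

Lemma binom_shift (x : R) m : \sum_(i < m.+1) 'C(m, i)%:R * (x ^+ (m - i) / i.+1%:R)
  = ((x + 1) ^+ m.+1 - x ^+ m.+1) / m.+1%:R.
Proof.
rewrite exprDn [in RHS]big_ord_recl /= subn0 bin0 expr0 mulr1 mulr1n addrAC subrr add0r.
rewrite mulr_suml; apply: eq_bigr => i _.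
rewrite /bump /= add1n subSS expr1n mulr1.
have h : (m.+1%:R * 'C(m, i)%:R = i.+1%:R * 'C(m.+1, i.+1)%:R :> R).
  by rewrite -!natrM mul_bin_diag.
have h' : ('C(m.+1, i.+1)%:R : R) = m.+1%:R * 'C(m, i)%:R / i.+1%:R.
  by rewrite h; field; rewrite ?nat1r ?pnatr_eq0.
rewrite -[in RHS]mulr_natr h'; field; by rewrite ?nat1r ?pnatr_eq0.
Qed.

Lemma Qstar_id m : \sum_(i < m) 'C(m, i)%:R * \sum_(j < b) (j%:R ^+ (m - i)) * (b%:R / i.+1%:R)
  = b%:R / m.+1%:R * (b%:R ^+ m.+1 - b%:R) :> R.
Proof.
have tel : \sum_(j < b) (((j%:R : R) + 1) ^+ m.+1 - j%:R ^+ m.+1) = b%:R ^+ m.+1.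
  rewrite -(big_mkord xpredT (fun j => ((j%:R : R) + 1) ^+ m.+1 - j%:R ^+ m.+1)).
  rewrite (telescope_sumr_eq (fun j => (j%:R:R) ^+ m.+1)) //.
    by rewrite expr0n subr0.
  by move=> k _; rewrite natr1.
have T : \sum_(i < m.+1) 'C(m, i)%:R * \sum_(j < b) (j%:R ^+ (m - i)) * (b%:R / i.+1%:R)
   = b%:R * (b%:R ^+ m.+1 / m.+1%:R) :> R.
  rewrite -tel big_distrl /=.
  under [in RHS]eq_bigr => j _ do rewrite -binom_shift.
  rewrite [in RHS]mulr_sumr; under [in RHS]eq_bigr => j _ do rewrite mulr_sumr.
  rewrite [in RHS]exchange_big /=; apply: eq_bigr => i _.
  rewrite !mulr_sumr; apply: eq_bigr => j _; ring.
rewrite big_ord_recr /= subnn binn in T.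
have E : \sum_(j < b) (j%:R : R) ^+ 0 * (b%:R / m.+1%:R) = b%:R * (b%:R / m.+1%:R).
  under eq_bigr do rewrite expr0 mul1r.
  by rewrite sumr_const card_ord [in RHS]mulr_natl.
rewrite E in T.
apply: (addIr (1%:R * (b%:R * (b%:R / m.+1%:R)))); rewrite T; ring.
Qed.


Definition Q k m : R := \sum_(i < m) 'C(m, i)%:R * \sum_(j < b) (j%:R ^+ (m - i)) * Wv j k i.

Lemma vsplit k m : v k m * b%:R ^+ m.+1 =
  ((k == 0)%N && (m == 0)%N)%:R * b%:R ^+ m.+1 + Q k m + Wv d k m + (b%:R - 1) * v k m.
Proof.
rewrite {1}vrec mulrDl mulrAC mulVf ?expf_neq0 ?bne0 // mul1r -!addrA; congr (_ + _).
rewrite big_ord_recr /= subnn binn mulr1n (@sum_split _ (v k m)).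
  by rewrite expr0 mul1r mul1r addrA.
by move=> j /negbTE jd; rewrite expr0 mul1r /Wv jd.
Qed.

Lemma v0 k : v k 0 = b%:R.
Proof.
have b1 : (1 < b%:R :> R) by rewrite ltr1n.
elim: k => [|k IH]; [have := vsplit 0 0 | have := vsplit k.+1 0];
  rewrite /Q big_ord0 addr0 expr1 /Wv !eqxx /=.
  by rewrite mul1r addr0; nra.
by rewrite mul0r add0r IH; nra.
Qed.

Lemma sum_ge_term (I : finType) (F : I -> R) i0 : (forall i, 0 <= F i) -> F i0 <= \sum_i F i.
Proof.
by move=> h; rewrite (bigD1 i0) //= lerDl; apply: sumr_ge0 => i _.
Qed.

Lemma QB k m : Q k.+1 m - Q k m =
  \sum_(i < m) 'C(m, i)%:R * \sum_(j < b) (j%:R ^+ (m - i)) * (Wv j k.+1 i - Wv j k i).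
Proof.
rewrite /Q -sumrB; apply: eq_bigr => i _; rewrite -mulrBr -sumrB; congr (_ * _).
by apply: eq_bigr => j _; rewrite mulrBr.
Qed.

Lemma Q_ge0 k m : 0 <= Q k m.
Proof.
apply: sumr_ge0 => i _; apply: mulr_ge0 => //; apply: sumr_ge0 => j _.
apply: mulr_ge0; first by rewrite exprn_ge0.
by rewrite /Wv; case: (j == d); [case: k => [|k] //|]; exact: v_ge0.
Qed.

Lemma Qle k m : (forall (i : 'I_m) j, Wv j k i <= Wv j k.+1 i) -> 
  0 <= Q k.+1 m - Q k m.
Proof.
move=> h; rewrite QB; apply: sumr_ge0 => i _; apply: mulr_ge0 => //; apply: sumr_ge0 => j _.
by apply: mulr_ge0; [rewrite exprn_ge0 | rewrite subr_ge0 h].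
Qed.

Lemma vstep k m : (0 < m)%N -> 
  Q k m + Wv d k m < Q k.+1 m + Wv d k.+1 m -> v k m < v k.+1 m.
Proof.
move=> m0 h.
have := vsplit k m; have := vsplit k.+1 m.
have -> : ((k.+1 == 0)%N && (m == 0)%N) = false by [].
have -> : ((k == 0)%N && (m == 0)%N) = false by rewrite (negbTE (lt0n_neq0 m0)) andbF.
rewrite !mul0r !add0r => e1 e2.
have bm : (b%:R * b%:R <= b%:R ^+ m.+1 :> R).
  rewrite -expr2 ler_eXn2l // ?ltr1n //. 
have b1 : (1 < b%:R :> R) by rewrite ltr1n.
nra.
Qed.

Lemma Wv_ge0 j k i : 0 <= Wv j k i.
Proof. by rewrite /Wv; case: (j == d); [case: k => [|k] //|]; exact: v_ge0. Qed.

Lemma Q0_pos m : (0 < m)%N -> d = 0 :> nat -> b%:R <= Q 0 m.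
Proof.
case: m => // m _ d0; rewrite /Q.
apply: le_trans (@sum_ge_term _ _ (ord0) _); last first.
  move=> i; apply: mulr_ge0 => //; apply: sumr_ge0 => j _.
  by apply: mulr_ge0; [rewrite exprn_ge0 | exact: Wv_ge0].
rewrite bin0 mul1r /= subn0.
apply: le_trans (@sum_ge_term _ _ (Ordinal hb) _); last first.
  by move=> j; apply: mulr_ge0; [rewrite exprn_ge0 | exact: Wv_ge0].
have jd : (Ordinal hb == d) = false.
  by apply/negbTE/eqP => /(congr1 val) /=; rewrite d0.
by rewrite /Wv jd /= expr1n mul1r v0.
Qed.

Lemma QB_pos m : (0 < m)%N -> (0 < d)%N ->
  (forall (i : 'I_m) j, Wv j 0 i <= Wv j 1 i) -> b%:R * d%:R ^+ m <= Q 1 m - Q 0 m.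
Proof.
case: m => // m _ dp h; rewrite QB.
apply: le_trans (@sum_ge_term _ _ (ord0) _); last first.
  move=> i; apply: mulr_ge0 => //; apply: sumr_ge0 => j _.
  by apply: mulr_ge0; [rewrite exprn_ge0 | rewrite subr_ge0 h].
rewrite bin0 mul1r /= subn0.
apply: le_trans (@sum_ge_term _ _ (d) _); last first.
  by move=> j; apply: mulr_ge0; [rewrite exprn_ge0 | rewrite subr_ge0; exact: (h ord0)].
by rewrite /Wv eqxx /= subr0 v0 mulrC.
Qed.

Lemma Wv_le k i j : ((0 < i)%N -> v k i <= v k.+1 i) ->
  (forall k', k = k'.+1 -> (0 < i)%N -> v k' i <= v k i) -> Wv j k i <= Wv j k.+1 i.
Proof.
move=> h1 h2; rewrite /Wv; case: (j == d).
  case: k h1 h2 => [|k] h1 h2 /=; first exact: v_ge0.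
  by case: (posnP i) => [->|ip]; [rewrite !v0 | exact: h2].
by case: (posnP i) => [->|ip]; [rewrite !v0 | exact: h1].
Qed.

Lemma v_inc k m : (0 < m)%N -> v k m < v k.+1 m.
Proof.
have b1 : (1 < b%:R :> R) by rewrite ltr1n.
elim: k m => [|k IHk] m; elim/ltn_ind: m => m IHm m0; apply: vstep => //.
  have Wle : forall (i : 'I_m) j, Wv j 0 i <= Wv j 1 i.
    move=> i j; apply: Wv_le => // ip; exact/ltW/IHm.
  have hQ := Qle _ _ Wle.
  rewrite /Wv eqxx /=.
  case: (posnP d) => [d0 | dp].
    have hq := Q0_pos _ m0 d0.
    have := vsplit 0 m; rewrite /Wv !eqxx (negbTE (lt0n_neq0 m0)) /= mul0r add0r addr0.
    have bm : (b%:R * b%:R <= b%:R ^+ m.+1 :> R).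
      by rewrite -expr2 ler_eXn2l // ?ltr1n.
    nra.
  have := QB_pos _ m0 dp Wle.
  have : 0 < b%:R * d%:R ^+ m :> R by rewrite mulr_gt0 ?exprn_gt0 ?ltr0n // (ltn_trans _ hb).
  have := v_ge0 0 m.
  lra.
have Wle : forall (i : 'I_m) j, Wv j k.+1 i <= Wv j k.+2 i.
  move=> i j; apply: Wv_le => [ip|k' [<-] ip]; [exact/ltW/IHm | exact/ltW/IHk].
have hQ := Qle _ _ Wle.
rewrite /Wv eqxx /=.
have := IHk m m0; lra.
Qed.

Lemma v_cvg m : v k m @[k --> \oo] --> (b%:R / m.+1%:R : R).
Proof.
elim/ltn_ind: m => m IHm; case: (posnP m) => [->|m0].
  rewrite (_ : (fun k => v k 0) = fun=> b%:R); last by apply: funext => k; rewrite v0.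
  by rewrite divr1; exact: cvg_cst.
have Wc : forall (i : 'I_m) j, Wv j k i @[k --> \oo] --> (b%:R / i.+1%:R : R).
  move=> i j; rewrite /Wv; case: (j == d); last exact: IHm.
  by rewrite -cvg_shiftS /=; exact: IHm.
have Qc : Q k m @[k --> \oo] -->
    (\sum_(i < m) 'C(m, i)%:R * \sum_(j < b) (j%:R ^+ (m - i)) * (b%:R / i.+1%:R) : R).
  rewrite /Q; apply: cvg_sum_ord => i; apply: cvgMl_tmp; apply: cvg_sum_ord => j.
  by apply: cvgMl_tmp; exact: Wc.
have vc : cvgn (fun k => v k m).
  apply: nondecreasing_is_cvgn.
    by apply/nondecreasing_seqP => k; apply/ltW/v_inc.
  by exists b%:R => _ [k _ <-]; exact: v_le.
set l := limn (fun k => v k m).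
have vl : v k m @[k --> \oo] --> l := vc.
have Wl : Wv d k m @[k --> \oo] --> l.
  by rewrite /Wv eqxx -cvg_shiftS /=; exact: vl.
have e1 : v k m * b%:R ^+ m.+1 @[k --> \oo] --> l * b%:R ^+ m.+1.
  exact: cvgMr_tmp.
have e2 : v k m * b%:R ^+ m.+1 @[k --> \oo] -->
    (\sum_(i < m) 'C(m, i)%:R * \sum_(j < b) (j%:R ^+ (m - i)) * (b%:R / i.+1%:R)
    + l + (b%:R - 1) * l : R).
  under eq_cvg do rewrite vsplit (negbTE (lt0n_neq0 m0)) andbF mul0r add0r.
  by apply: cvgD; [apply: cvgD | apply: cvgMl_tmp].
have E : (\sum_(i < m) 'C(m, i)%:R * \sum_(j < b) (j%:R ^+ (m - i)) * (b%:R / i.+1%:R)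
    + l + (b%:R - 1) * l : R) = l * b%:R ^+ m.+1.
  transitivity (lim (v k m * b%:R ^+ m.+1 @[k --> \oo])).
    by apply/esym; apply: cvg_lim => //.
  by apply: cvg_lim => //.
rewrite Qstar_id in E.
suff -> : b%:R / m.+1%:R = l by [].
have bm : (b%:R * b%:R <= b%:R ^+ m.+1 :> R).
  by rewrite -expr2 ler_eXn2l // ?ltr1n.
have b1 : (1 < b%:R :> R) by rewrite ltr1n.
have nz : b%:R ^+ m.+1 - b%:R != 0 :> R.
  by rewrite subr_eq0; apply/eqP => h; move: bm; rewrite h; nra.
apply: (mulIf nz).
apply: (addIr (l + (b%:R - 1) * l)); rewrite addrA E; ring.
Qed.

Lemma j0_of (j : 'I_b) : b = 2%N -> d = 1%N :> nat -> j != d -> j = 0%N :> nat.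
Proof.
move=> b2 d1 jd; have := ltn_ord j; rewrite {2}b2 => lt2.
have j1 : (j : nat) != 1%N.
  by apply: contra jd => /eqP h; apply/eqP/val_inj; rewrite /= h d1.
by move: lt2 j1; case: (nat_of_ord j) => [|[|n]].
Qed.

Lemma v0_21 m : b = 2%N -> d = 1%N :> nat -> (0 < m)%N -> v 0 m = 0.
Proof.
move=> b2 d1 m0.
have Q0 : Q 0 m = 0.
  rewrite /Q big1 // => i _; rewrite big1 ?mulr0 // => j _.
  rewrite /Wv; case: eqP => [_|/eqP jd]; first by rewrite mulr0.
  by rewrite (j0_of _ b2 d1 jd) expr0n subn_eq0 leqNgt ltn_ord mul0r.
have := vsplit 0 m; rewrite Q0 /Wv !eqxx (negbTE (lt0n_neq0 m0)) /= mul0r !add0r.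
have bm : (b%:R * b%:R <= b%:R ^+ m.+1 :> R).
  by rewrite -expr2 ler_eXn2l // ?ltr1n.
have b1 : (1 < b%:R :> R) by rewrite ltr1n.
have := v_ge0 0 m; nra.
Qed.

Lemma v1_21 m : b = 2%N -> d = 1%N :> nat -> v 1 m = 2 / (2 ^+ m.+1 - 1).
Proof.
move=> b2 d1; have bR : (b%:R : R) = 2 by rewrite b2.
case: (posnP m) => [->|m0].
  rewrite v0 bR expr1; have -> : (2 : R) - 1 = 1 by lra.
  by rewrite divr1.
have Q1 : Q 1 m = 2.
  rewrite /Q; case: m m0 => // m _.
  rewrite big_ord_recl /= bin0 mul1r.
  rewrite (@sum_split _ 0); last first.
    by move=> j jd; rewrite (j0_of _ b2 d1 jd) expr0n /= mul0r.
  rewrite mulr0 addr0 /Wv !eqxx /= v0 d1 expr1n mul1r bR big1 ?addr0 // => i _.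
  rewrite (@sum_split _ 0); last first.
    move=> j jd; rewrite (j0_of _ b2 d1 jd) expr0n /bump /=.
    by rewrite subn_eq0 leqNgt ltnS add1n ltn_ord mul0r.
  rewrite mulr0 addr0 /Wv !eqxx /= d1 expr1n mul1r.
  by rewrite v0_21 ?mulr0.
have := vsplit 1 m; rewrite Q1 /Wv !eqxx /= v0_21 // mul0r add0r addr0 bR.
move=> e; have p : (2 : R) ^+ m.+1 - 1 != 0.
  rewrite subr_eq0; apply/eqP => h; move: e; rewrite h; lra.
apply: (mulIf p); rewrite divfK //.
move: e; lra.
Qed.

End S.

Theorem mainTheorem11 (R : realType) (b : nat) (d : 'I_b) (hb : (1 < b)%N) :
  (forall m : nat, (0 < m)%N ->
     (forall k : nat, (u R d k m < u R d k.+1 m)%E) /\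
     (u R d k m @[k --> \oo] --> (b%:R / m.+1%:R : R)%:E)) /\
  (b = 2%N -> nat_of_ord d = 1%N ->
     (forall m : nat, (0 < m)%N -> u R d 0 m = 0%E) /\
     (forall m : nat, u R d 1 m = (2 / (2 ^+ m.+1 - 1) : R)%:E)).
Proof.
split.
  move=> m m0; split.
    by move=> k; rewrite !(@uE R b d hb) lte_fin; exact: v_inc.
  under eq_cvg do rewrite (@uE R b d hb).
  by apply: (cvg_comp _ _ (@v_cvg R b d hb m)).
move=> b2 d1; split.
  by move=> m m0; rewrite (@uE R b d hb) (@v0_21 R b d hb).
by move=> m; rewrite (@uE R b d hb) (@v1_21 R b d hb).
Qed.
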